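(* In Algorithm SC (with $|b(v)|\le\deg(v)$ for all $v$ and $\alpha\in(0,1/4]$), for every $i\ge0$ such that rounds $1,\dots,i$ have computed $r^1,\dots,r^i$, we have $\sum_{v\in V}|r^{\le i}_v|\cdot\deg(v)\le i\cdot\|b\|_1$.
   Context: Let $G=(V,E)$ be a unit-capacity undirected graph, $n=|V|\ge3$, every vertex of degree $\deg(v)\ge1$, each edge with a fixed arbitrary orientation; $B\in\mathbb R^{V\times E}$ is the incidence matrix (column $(u,v)$ has $+1$ in row $u$, $-1$ in row $v$, $0$ elsewhere). Algorithm SC takes $b\in\mathbb R^V$ with $|b(v)|\le\deg(v)$ for all $v$, $\alpha\in(0,1/4]$ and an integer $T\ge1$. Set $w^1_{v,+}=w^1_{v,-}=1$ for all $v$. For $i=1,\dots,T$: (1) for $\circ\in\{+,-\}$, $\tilde w^i_{v,\circ}=w^i_{v,\circ}$ if $w^i_{v,\circ}\ge n$ and $\tilde w^i_{v,\circ}=0$ otherwise; (2) $\tilde\phi^i_v=(\tilde w^i_{v,+}-\tilde w^i_{v,-})/\deg(v)$; (3) for each edge $(u,v)$, $f^i(u,v)=+1$ if $\tilde\phi^i_u>\tilde\phi^i_v$, $-1$ if $\tilde\phi^i_u<\tilde\phi^i_v$, $0$ otherwise; (4) if $\langle\tilde\phi^i,b\rangle>\langle\tilde\phi^i,Bf^i\rangle$, terminate; (5) $r^i_v=(b(v)-(Bf^i)_v)/\deg(v)$; (6) $w^{i+1}_{v,+}=w^i_{v,+}(1+\alpha r^i_v)$ and $w^{i+1}_{v,-}=w^i_{v,-}(1-\alpha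 r^i_v)$. Write $r^{\le i}_v=\sum_{i'=1}^{i}r^{i'}_v$, with $r^{\le 0}_v=0$. $\|b\|_1=\sum_v|b(v)|$. *)

(* Defs.v *)
From HB Require Import structures.
From mathcomp Require Import all_boot all_order all_algebra.
Set Implicit Arguments. Unset Strict Implicit. Unset Printing Implicit Defensive.
Import Order.TTheory GRing.Theory Num.Theory.
Local Open Scope ring_scope.

Section SC.
Variables (R : realFieldType) (V E : finType) (src dst : E -> V).

Definition deg (v : V) : nat := #|[set e : E | (src e == v) || (dst e == v)]|.

Definition simple_graph : Prop :=
  (forall e, src e != dst e) /\
  (forall e1 e2, ((src e1 == src e2) && (dst e1 == dst e2)) ||
                 ((src e1 == dst e2) && (dst e1 == src e2)) -> e1 = e2).

Definition incid (v : V) (e : E) : R :=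
  (if src e == v then 1 else 0) - (if dst e == v then 1 else 0).

Definition Bmul (f : E -> R) (v : V) : R := \sum_(e : E) incid v e * f e.

Definition inner (x y : V -> R) : R := \sum_(v : V) x v * y v.

(* weights: a pair (w_+, w_-) *)
Definition weights := ((V -> R) * (V -> R))%type.

Definition thresh (x : R) : R := if #|V|%:R <= x then x else 0.

Definition phi (w : weights) (v : V) : R :=
  (thresh (w.1 v) - thresh (w.2 v)) / (deg v)%:R.

Definition flow (w : weights) (e : E) : R :=
  if phi w (dst e) < phi w (src e) then 1
  else if phi w (src e) < phi w (dst e) then -1 else 0.

Definition terminates (b : V -> R) (w : weights) : Prop :=
  inner (phi w) (Bmul (flow w)) < inner (phi w) b.

Definition resid (b : V -> R) (w : weights) (v : V) : R :=
  (b v - Bmul (flow w) v) / (deg v)%:R.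

Definition update (b : V -> R) (alpha : R) (w : weights) : weights :=
  (fun v => w.1 v * (1 + alpha * resid b w v),
   fun v => w.2 v * (1 - alpha * resid b w v)).

(* W b alpha k = the weights w^{k+1} used in round k+1 (so W 0 = w^1 = all ones) *)
Fixpoint W (b : V -> R) (alpha : R) (k : nat) : weights :=
  match k with
  | 0 => (fun _ => 1, fun _ => 1)
  | k'.+1 => update b alpha (W b alpha k')
  end.

(* r^i = resid b (W b alpha (i-1)) ; cumulative r^{<= i} *)
Definition r_le (b : V -> R) (alpha : R) (i : nat) (v : V) : R :=
  \sum_(j < i) resid b (W b alpha j) v.

End SC.

(* Main.v *)
Require Import Defs.
From HB Require Import structures.
From mathcomp Require Import all_boot all_order all_algebra.
From mathcomp Require Import ring lra.
Import Order.TTheory GRing.Theory Num.Theory.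
Local Open Scope ring_scope.

Lemma pow_small (R : realFieldType) (t : R) (k : nat) :
  0 <= t -> k%:R * t <= 1/2 -> forall m, (m <= k)%N -> (1 + t) ^+ m <= 1 + 2 * m%:R * t.
Proof.
move=> t0 kt; elim=> [|m IH] Hm; first by rewrite expr0 mulr0 mul0r addr0.
have Hm' : (m <= k)%N by apply: ltnW.
have := IH Hm'; rewrite exprSr => H.
have mk : m.+1%:R <= k%:R :> R by rewrite ler_nat.
have e1 : 0 <= (1 + t) ^+ m by apply: exprn_ge0; lra.
rewrite -natr1 in mk *.
have h1 : (1 + t) ^+ m * (1 + t) <= (1 + 2 * m%:R * t) * (1 + t).
  by apply: ler_wpM2r => //; lra.
have mt0 : (m%:R + 1) * t <= k%:R * t by apply: ler_wpM2r.
have mt: 0 <= t * (1 - 2 * (m%:R * t)) by apply: mulr_ge0 => //; nra.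
rewrite -natr1.
nra.
Qed.

Lemma prod_lt3 (R : realFieldType) (k : nat) (c : 'I_k -> R) :
  (forall j, 0 <= 1 + c j) -> \sum_j c j <= 1/4 -> \prod_j (1 + c j) < 3.
Proof.
move=> c0 cs.
case: k c c0 cs => [|k] c c0 cs; first by rewrite big_ord0; lra.
have := leif_AGM (A := predT) (E := fun j => 1 + c j) (fun j _ => c0 j).
move=> /= [H _].
rewrite cardT size_enum_ord in H.
apply: le_lt_trans H _.
rewrite big_split /= sumr_const card_ord.
set C := \sum_j c j. have csC : C <= 1/4 := cs.
have kp : 0 < k.+1%:R :> R by rewrite ltr0n.
have Eq : (1 *+ k.+1 + C) / k.+1%:R = 1 + C / k.+1%:R.
  rewrite mulrDl -mulr_natr mul1r divff //; lra.
rewrite Eq.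
set t := C / k.+1%:R.
case: (lerP t 0) => ht.
  have sumge : 0 <= \sum_j (1 + c j) by apply: sumr_ge0 => j _; exact: c0 j.
  rewrite big_split /= sumr_const card_ord -/C in sumge.
  have : 0 <= 1 + t.
    by have := divr_ge0 sumge (ltW kp); rewrite Eq.
  move=> t1.
  have : (1 + t) ^+ k.+1 <= 1 by apply: exprn_ile1; lra.
  lra.
have kt : k.+1%:R * t <= 1/2.
  rewrite /t mulrC divfK ?pnatr_eq0 //; lra.
have := @pow_small _ t k.+1 (ltW ht) kt k.+1 (leqnn _).
have : 2 * k.+1%:R * t <= 1 by lra.
lra.
Qed.

Lemma sum_incid (R : realFieldType) (V E : finType) (src dst : E -> V)
  (s : V -> R) (e : E) :
  \sum_v s v * incid R src dst v e = s (src e) - s (dst e).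
Proof.
rewrite /incid.
under eq_bigr do rewrite mulrBr.
rewrite sumrB.
have H : forall u : V, \sum_v s v * (if u == v then 1 else 0) = s u.
  move=> u.
  under eq_bigr do rewrite (fun_if (fun z => s _ * z)) mulr1 mulr0.
  rewrite -big_mkcond /=.
  by rewrite (big_pred1 u) // => v; rewrite /= eq_sym.
by rewrite !H.
Qed.

Lemma step_gen (R : realFieldType) (V E : finType) (src dst : E -> V)
  (p x : V -> R) (f : E -> R) :
  (forall e, f e = if p (dst e) < p (src e) then 1
                   else if p (src e) < p (dst e) then -1 else 0) ->
  (forall v, 0 < p v -> Bmul src dst f v <= x v) ->
  (forall v, p v < 0 -> x v <= Bmul src dst f v) ->
  \sum_v `|x v - Bmul src dst f v| <= \sum_v `|x v|.
Proof.
move=> hf hP hN.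
set g := Bmul src dst f.
have [s Hs] : {s : V -> R | forall v, s v = if 0 < p v then 1 else if p v < 0 then -1
                else if 0 <= x v - g v then 1 else -1} by eexists; move=> v; reflexivity.
have sP : forall v, 0 < p v -> s v = 1 by move=> v h; rewrite Hs h.
have sN : forall v, p v < 0 -> s v = -1.
  by move=> v h; rewrite Hs h ifF //; apply/negbTE; rewrite -leNgt ltW.
have sB : forall v, s v = 1 \/ s v = -1.
  by move=> v; rewrite Hs; case: (0 < p v); case: (p v < 0); case: (0 <= x v - g v); auto.
have hs : forall v, `|x v - g v| = s v * (x v - g v).
  move=> v; rewrite Hs.
  case: ifP => h1.
    by rewrite mul1r ger0_norm // subr_ge0; apply: hP.
  case: ifP => h2.
    by rewrite ler0_norm ?mulN1r // subr_le0; apply: hN.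
  case: ifP => h3; first by rewrite mul1r ger0_norm.
  by rewrite ltr0_norm ?mulN1r // ltNge h3.
have hs2 : forall v, s v * x v <= `|x v|.
  move=> v; have := ler_norm (x v); have := ler_norm (- x v); rewrite normrN.
  by case: (sB v) => ->; lra.
have hs3 : 0 <= \sum_v s v * g v.
  rewrite /g /Bmul.
  under eq_bigr do rewrite mulr_sumr.
  rewrite exchange_big /=; apply: sumr_ge0 => e _.
  under eq_bigr do rewrite mulrA.
  rewrite -mulr_suml sum_incid hf.
  case: ifP => h1.
    rewrite mulr1 subr_ge0.
    case: (ltrP 0 (p (src e))) => h2.
      by rewrite (sP (src e)) //; case: (sB (dst e)) => ->; lra.
    by rewrite (sN (dst e)); [case: (sB (src e)) => ->; lra | lra].
  case: ifP => h2; last by rewrite mulr0.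
  rewrite mulrN1 oppr_ge0 subr_le0.
  case: (ltrP 0 (p (dst e))) => h3.
    by rewrite (sP (dst e)) //; case: (sB (src e)) => ->; lra.
  by rewrite (sN (src e)); [case: (sB (dst e)) => ->; lra | lra].
under eq_bigr do rewrite hs mulrBr.
rewrite sumrB.
have : \sum_v s v * x v <= \sum_v `|x v| by apply: ler_sum => v _; exact: hs2.
lra.
Qed.

Section Main.
Variables (R : realFieldType) (V E : finType) (src dst : E -> V).
Variables (b : V -> R) (alpha : R).
Hypothesis V3 : (3 <= #|V|)%N.
Hypothesis deg1 : forall v, (1 <= deg src dst v)%N.
Hypothesis bb : forall v, `|b v| <= (deg src dst v)%:R.
Hypothesis a0 : 0 < alpha.
Hypothesis a4 : alpha <= 1/4.

Notation d v := ((deg src dst v)%:R : R).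

Lemma d_gt0 v : 0 < d v.
Proof. by rewrite ltr0n; apply: deg1. Qed.

Lemma Bf_bound (w : weights R V) v : `|Bmul src dst (flow src dst w) v| <= d v.
Proof.
rewrite /Bmul.
apply: le_trans (ler_norm_sum _ _ _) _.
apply: (@le_trans _ _ (\sum_e (if (src e == v) || (dst e == v) then 1 else 0 : R))).
  apply: ler_sum => e _; rewrite normrM.
  have hf : `|flow src dst w e| <= 1.
    rewrite /flow; case: ifP => _; first by rewrite normr1.
    by case: ifP => _; rewrite ?normrN ?normr1 ?normr0.
  rewrite /incid; case: (src e == v); case: (dst e == v) => /=;
    rewrite ?subrr ?normr0 ?mul0r ?subr0 ?sub0r ?normrN ?normr1 ?mul1r //.
rewrite -big_mkcond /= sumr_const /deg cardsE.
by [].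
Qed.

Lemma resid_bound (w : weights R V) v : `|resid src dst b w v| <= 2.
Proof.
rewrite /resid normrM normfV (gtr0_norm (d_gt0 v)).
have h1 := Bf_bound w v; have h2 := bb v; have h3 := d_gt0 v.
rewrite ler_pdivrMr //.
apply: le_trans (ler_normB _ _) _; lra.
Qed.

Lemma W1 k v : (W src dst b alpha k).1 v =
  \prod_(j < k) (1 + alpha * resid src dst b (W src dst b alpha j) v).
Proof. by elim: k => [|k IH]; rewrite ?big_ord0 // big_ord_recr /= IH. Qed.

Lemma W2 k v : (W src dst b alpha k).2 v =
  \prod_(j < k) (1 - alpha * resid src dst b (W src dst b alpha j) v).
Proof. by elim: k => [|k IH]; rewrite ?big_ord0 // big_ord_recr /= IH. Qed.

Lemma thresh_ge0 (x : R) : 0 <= thresh V x.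
Proof.
rewrite /thresh; case: ifP => // h; apply: le_trans h; exact: ler0n.
Qed.

Lemma thresh_pos (x : R) : 0 < thresh V x -> #|V|%:R <= x.
Proof. by rewrite /thresh; case: ifP => // _; rewrite ltxx. Qed.

Lemma phi_pos (w : weights R V) v : 0 < phi src dst w v -> #|V|%:R <= w.1 v.
Proof.
rewrite /phi pmulr_lgt0 ?invr_gt0 ?d_gt0 // subr_gt0 => h.
apply: thresh_pos; apply: le_lt_trans h; exact: thresh_ge0.
Qed.

Lemma phi_neg (w : weights R V) v : phi src dst w v < 0 -> #|V|%:R <= w.2 v.
Proof.
rewrite /phi pmulr_llt0 ?invr_gt0 ?d_gt0 // subr_lt0 => h.
apply: thresh_pos; apply: le_lt_trans h; exact: thresh_ge0.
Qed.

Lemma n3 : 3 <= #|V|%:R :> R.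
Proof. have : (3%:R <= #|V|%:R :> R) by rewrite ler_nat. by []. Qed.

Lemma key_pos k v : 0 < phi src dst (W src dst b alpha k) v ->
  1 < r_le src dst b alpha k v.
Proof.
move=> /phi_pos; rewrite W1 => h.
have a4p : alpha <= 1/4 := a4; have a0p : 0 < alpha := a0; clear a4 a0.
set c := fun j : 'I_k => alpha * resid src dst b (W src dst b alpha j) v.
have c0 : forall j, 0 <= 1 + c j.
  move=> j; rewrite /c; have := resid_bound (W src dst b alpha j) v.
  set r := resid _ _ _ _ _ => hr; clearbody r.
  have : - 2 <= r by move: hr; rewrite ler_norml => /andP[].
  move=> hr2; have : 0 <= r + 2 by lra. move=> /(mulr_ge0 (ltW a0p)); rewrite mulrDr; nra.
case: (lerP (\sum_j c j) (1/4)) => hs.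
  have := @prod_lt3 _ _ c c0 hs; have := n3; rewrite /c; lra.
move: hs; rewrite /c -mulr_sumr /r_le => hs.
set S := \sum_(j < k) _ in hs *.
nra.
Qed.

Lemma key_neg k v : phi src dst (W src dst b alpha k) v < 0 ->
  r_le src dst b alpha k v < -1.
Proof.
move=> /phi_neg; rewrite W2 => h.
have a4p : alpha <= 1/4 := a4; have a0p : 0 < alpha := a0; clear a4 a0.
set c := fun j : 'I_k => - (alpha * resid src dst b (W src dst b alpha j) v).
have c0 : forall j, 0 <= 1 + c j.
  move=> j; rewrite /c; have := resid_bound (W src dst b alpha j) v.
  set r := resid _ _ _ _ _ => hr; clearbody r.
  have : r <= 2 by move: hr; rewrite ler_norml => /andP[].
  move=> hr2; have : 0 <= 2 - r by lra. move=> /(mulr_ge0 (ltW a0p)); rewrite mulrBr; nra.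
case: (lerP (\sum_j c j) (1/4)) => hs.
  have := @prod_lt3 _ _ c c0 hs; have := n3; rewrite /c; lra.
move: hs; rewrite /c sumrN -mulr_sumr /r_le => hs.
set S := \sum_(j < k) _ in hs *.
nra.
Qed.

Lemma main k : \sum_v `|r_le src dst b alpha k v * d v| <= k%:R * \sum_v `|b v|.
Proof.
elim: k => [|k IH].
  rewrite mul0r; under eq_bigr do rewrite /r_le big_ord0 mul0r normr0.
  by rewrite big1.
set g := Bmul src dst (flow src dst (W src dst b alpha k)).
have ex : forall v, r_le src dst b alpha k.+1 v * d v =
    (r_le src dst b alpha k v * d v - g v) + b v.
  move=> v; rewrite /r_le big_ord_recr /= /resid -/g.
  have := d_gt0 v => hd.
  field; lra.
under eq_bigr do rewrite ex.
apply: le_trans (_ : \sum_v (`|r_le src dst b alpha k v * d v - g v| + `|b v|) <= _).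
  by apply: ler_sum => v _; apply: ler_normD.
rewrite big_split /=.
have st : \sum_v `|r_le src dst b alpha k v * d v - g v| <=
          \sum_v `|r_le src dst b alpha k v * d v|.
  apply: (@step_gen R V E src dst (phi src dst (W src dst b alpha k))) => //.
    move=> v /key_pos h.
    have := Bf_bound (W src dst b alpha k) v; rewrite -/g => hg.
    have := ler_norm (g v); have := d_gt0 v; nra.
  move=> v /key_neg h.
  have := Bf_bound (W src dst b alpha k) v; rewrite -/g => hg.
  have := ler_norm (- g v); rewrite normrN; have := d_gt0 v; nra.
rewrite -natr1 mulrDl mul1r; lra.
Qed.

End Main.

Theorem lemma2p8 (R : realFieldType) (V E : finType) (src dst : E -> V)
  (b : V -> R) (alpha : R) (T i : nat) :
  simple_graph src dst ->
  (3 <= #|V|)%N ->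
  (forall v, (1 <= deg src dst v)%N) ->
  (forall v, `|b v| <= (deg src dst v)%:R) ->
  0 < alpha -> alpha <= 1 / 4 ->
  (1 <= T)%N ->
  (i <= T)%N ->
  (* rounds 1..i did not terminate at step (4), so r^1..r^i were computed *)
  (forall j, (j < i)%N -> ~ terminates src dst b (W src dst b alpha j)) ->
  \sum_(v : V) `|r_le src dst b alpha i v| * (deg src dst v)%:R
    <= i%:R * \sum_(v : V) `|b v|.
Proof.
move=> _ V3 deg1 bb a0 a4 _ _ _.
have := @main R V E src dst b alpha V3 deg1 bb a0 a4 i.
by under eq_bigr do rewrite normrM (ger0_norm (ler0n _ _)).
Qed.
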